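(* Let $(S,K,I)$ be a split graph. If the factor graph $\Phi(S)$ contains an induced path $v_1v_2v_3$ such that $d_1\leq d_2$ and $\sigma_{23}=1$, then: (1) $N_1-N_2=\{x\}=N_3-N_2$ for some vertex $x$ of $S$; (2) $N_3=\{x\}\dot\cup(N_2\cap N_3)\subsetneq N_1\cup N_2$; (3) $\sigma_{12}=d_2-d_1+1$.
   Context: A split graph $(S,K,I)$ is a graph $S$ together with a fixed partition $V(S)=K\dot\cup I$, where $K$ is a clique and $I$ is an independent set. For a vertex $v_i$ of $S$, $N_i$ denotes its open neighborhood in $S$ and $d_i=|N_i|$; $\eta_{uv}=|N_u\cap N_v|$. The factor graph $\Phi(S)$ is the loopless multigraph with vertex set $I$ in which, for distinct $u,v\in I$, there is one edge joining $u$ and $v$ for each 2-switch of $S$ acting on $u$ and $v$ (a 2-switch replaces edges $ab,cd$ with $ac,bd$ when $ab,cd\in E(S)$ and $ac,bd\notin E(S)$); equivalently, the multiplicity of $uv$ is $\sigma_{uv}=(d_u-\eta_{uv})(d_v-\eta_{uv})$, and $u,v$ are adjacent iff $\sigma_{uv}>0$; $\sigma_{ij}$ denotes $\sigma_{v_iv_j}$. An induced path in $\Phi(S)$ consists of distinct vertices with consecutive ones adjacent and no other pair adjacent (multiplicities ignored). *)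

(* Defs.v *)
From mathcomp Require Import all_boot.
Set Implicit Arguments. Unset Strict Implicit. Unset Printing Implicit Defensive.

Definition simple_graph (V : finType) (e : rel V) : Prop :=
  symmetric e /\ irreflexive e.

Definition split_graph (V : finType) (e : rel V) (K I : {set V}) : Prop :=
  [/\ simple_graph e,
      K :&: I = set0, K :|: I = [set: V],
      (forall u v, u \in K -> v \in K -> u != v -> e u v)
    & (forall u v, u \in I -> v \in I -> ~~ e u v)].

Definition nbhd (V : finType) (e : rel V) (v : V) : {set V} := [set w | e v w].
Definition deg (V : finType) (e : rel V) (v : V) : nat := #|nbhd e v|.
Definition eta (V : finType) (e : rel V) (u v : V) : nat :=
  #|nbhd e u :&: nbhd e v|.

(* multiplicity of the edge uv in the factor graph Phi(S) *)
Definition sigma (V : finType) (e : rel V) (u v : V) : nat :=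
  (deg e u - eta e u v) * (deg e v - eta e u v).

Definition phi_adj (V : finType) (e : rel V) (I : {set V}) (u v : V) : bool :=
  [&& u \in I, v \in I, u != v & 0 < sigma e u v].

Definition phi_induced_P3 (V : finType) (e : rel V) (I : {set V})
  (v1 v2 v3 : V) : Prop :=
  [/\ [&& v1 \in I, v2 \in I & v3 \in I],
      [&& v1 != v2, v2 != v3 & v1 != v3],
      phi_adj e I v1 v2, phi_adj e I v2 v3 & ~~ phi_adj e I v1 v3].

(* Main.v *)
Require Import Defs.
From mathcomp Require Import all_boot.
From mathcomp Require Import zify.

Lemma dmeta (V : finType) (e : rel V) u v :
  deg e u - eta e u v = #|nbhd e u :\: nbhd e v|.
Proof.
rewrite /deg /eta -(cardsID (nbhd e v) (nbhd e u)); lia.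
Qed.

Lemma dmeta' (V : finType) (e : rel V) u v :
  deg e v - eta e u v = #|nbhd e v :\: nbhd e u|.
Proof.
rewrite /deg /eta setIC -(cardsID (nbhd e u) (nbhd e v)); lia.
Qed.

Lemma card1_set (V : finType) (A : {set V}) : #|A| = 1 -> exists x, A = [set x].
Proof. by move/eqP/cards1P. Qed.

Theorem proposition4p4 (V : finType) (e : rel V) (K I : {set V})
  (v1 v2 v3 : V) :
  split_graph e K I ->
  phi_induced_P3 e I v1 v2 v3 ->
  deg e v1 <= deg e v2 ->
  sigma e v2 v3 = 1 ->
  exists x : V,
    [/\ nbhd e v1 :\: nbhd e v2 = [set x] /\ nbhd e v3 :\: nbhd e v2 = [set x],
        (nbhd e v3 = x |: (nbhd e v2 :&: nbhd e v3)
           /\ x \notin nbhd e v2 :&: nbhd e v3)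
          /\ nbhd e v3 \proper nbhd e v1 :|: nbhd e v2
      & sigma e v1 v2 = deg e v2 - deg e v1 + 1].
Proof.
move=> _ [/and3P[i1 i2 i3] /and3P[n12 n23 n13] a12 _ na13] d12.
move: a12 na13; rewrite /phi_adj i1 i2 i3 n12 n13 /= /sigma !dmeta !dmeta'.
rewrite /deg in d12 *.
set A := nbhd e v1; set B := nbhd e v2; set C := nbhd e v3.
move=> a12; rewrite -eqn0Ngt muln_eq0 !cards_eq0 !setD_eq0 => na13 s23.
have: (#|B :\: C| * #|C :\: B| == 1) by rewrite s23.
rewrite muln_eq1 => /andP[/eqP bc /eqP cb].
have [x Hx] := card1_set _ _ cb.
have [y Hy] := card1_set _ _ bc.
have d12p : #|A| <= #|B| by exact: d12.
have cBC := cardsID B C; have cCB := cardsID C B; rewrite setIC in cCB.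
have cAB := cardsID B A; have cBA := cardsID A B; rewrite setIC in cBA.
have ab0 : 0 < #|A :\: B| by move: a12; rewrite muln_gt0 => /andP[].
have AB : A :\: B = [set x].
  case/orP: na13 => [AC|CA].
    apply/eqP; rewrite eqEcard cards1 ab0 andbT -Hx.
    by apply: setSD.
  have /eqP AC : C == A by rewrite eqEcard CA /=; lia.
  by rewrite -AC.
have xC : x \in C :\: B by rewrite Hx set11.
have yB : y \in B :\: C by rewrite Hy set11.
move: xC yB; rewrite !in_setD => /andP[xB xC] /andP[yC yB].
exists x; split.
- by [].
- split; last first.
    rewrite properE; apply/andP; split.
      apply/subsetP => z zC; rewrite inE.
      case zB: (z \in B); first by rewrite orbT.
      have : z \in C :\: B by rewrite inE zB zC.
      rewrite Hx inE => /eqP ->.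
      have : x \in A :\: B by rewrite AB set11.
      by rewrite inE => /andP[_ ->].
    apply/negP => /subsetP /(_ y); rewrite inE yB orbT => /(_ isT).
    by rewrite (negbTE yC).
  split; last by rewrite in_setI (negbTE xB).
  by rewrite -{1}(setID C B) Hx setUC setIC.
- rewrite AB cards1 mul1n. have h1 : #|A :\: B| = 1 by rewrite AB cards1. rewrite -/A -/B. lia.
Qed.
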